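(* Let $p=p(n)$ and $G\in\mathcal G(n,p)$. If $p=o(n^{-3/2})$, then with high probability $G$ is reconstructible from its $1$-neighbourhoods.
   Context: $\mathcal G(n,p)$ is the Erdős–Rényi random graph on vertex set $[n]$ in which each pair is an edge independently with probability $p$. ''With high probability'' means with probability tending to $1$ as $n\to\infty$. For a graph $G$, a vertex $v$ and an integer $r\ge1$, the $r$-neighbourhood $N_r^{(G)}(v)$ is the subgraph of $G$ induced by the vertices at distance at most $r$ from $v$, considered as a graph rooted at $v$. Graphs $G$ and $H$ have isomorphic $r$-neighbourhoods if there is a bijection $\phi:V(G)\to V(H)$ such that for every $v\in V(G)$ there is a graph isomorphism $N_r^{(G)}(v)\to N_r^{(H)}(\phi(v))$ mapping $v$ to $\phi(v)$. $G$ is reconstructible from its $r$-neighbourhoods if every graph $H$ with $r$-neighbourhoods isomorphic to those of $G$ is isomorphic to $G$. *)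

(* Defs.v *)
From HB Require Import structures.
From mathcomp Require Import all_boot all_order all_fingroup all_algebra.
From mathcomp Require Import all_classical all_reals all_analysis.
Set Implicit Arguments. Unset Strict Implicit. Unset Printing Implicit Defensive.
Import Order.TTheory GRing.Theory Num.Theory.
Local Open Scope ring_scope.

(* A simple graph on vertex set [n] = 'I_n is given by a set E of 2-subsets.  *)
Definition pairs (n : nat) : {set {set 'I_n}} := [set e : {set 'I_n} | #|e| == 2%N].

Definition adj (n : nat) (E : {set {set 'I_n}}) : rel 'I_n :=
  fun x y => (x != y) && ([set x; y] \in E).

Fixpoint ball (n : nat) (E : {set {set 'I_n}}) (r : nat) (v : 'I_n) : {set 'I_n} :=
  match r with
  | 0 => [set v]
  | r'.+1 => ball E r' v :|: [set u | [exists w in ball E r' v, adj E w u]]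
  end.

(* A bijection between the two (equal-size) vertex sets is written as the
   restriction of a permutation of 'I_n. *)
Definition rooted_nbhd_iso (n : nat) (E F : {set {set 'I_n}}) (r : nat)
    (v w : 'I_n) : Prop :=
  exists f : {perm 'I_n},
    [/\ f v = w, f @: ball E r v = ball F r w &
        {in ball E r v &, forall x y, adj F (f x) (f y) = adj E x y}].

Definition iso_nbhds (n : nat) (E F : {set {set 'I_n}}) (r : nat) : Prop :=
  exists phi : {perm 'I_n}, forall v, rooted_nbhd_iso E F r v (phi v).

Definition graph_iso (n : nat) (E F : {set {set 'I_n}}) : Prop :=
  exists s : {perm 'I_n}, forall x y, adj F (s x) (s y) = adj E x y.

(* Reconstructible from r-neighbourhoods. Any graph H admitting a bijection
   from [n] has an isomorphic copy on [n], so quantifying over graphs on 'I_n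
   is no loss of generality. *)
Definition reconstructible (n : nat) (E : {set {set 'I_n}}) (r : nat) : Prop :=
  forall F : {set {set 'I_n}}, iso_nbhds E F r -> graph_iso E F.

Definition gnp_prob {R : realType} (n : nat) (p : R)
    (Q : {set {set 'I_n}} -> bool) : R :=
  \sum_(E in powerset (pairs n) | Q E)
     \prod_(e in pairs n) (if e \in E then p else 1 - p).
Arguments gnp_prob {R} n p Q.
Arguments ball n E r v.
Arguments adj n E x y.
Arguments rooted_nbhd_iso n E F r v w.
Arguments iso_nbhds n E F r.
Arguments graph_iso n E F.
Arguments reconstructible n E r.

(* Main.v *)
Require Import Defs.
From HB Require Import structures.
From mathcomp Require Import all_boot all_order all_fingroup all_algebra.
From mathcomp Require Import all_classical all_reals all_analysis.
From mathcomp Require Import ring lra.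
Import Order.TTheory GRing.Theory Num.Theory.
Import numFieldNormedType.Exports.
Set Implicit Arguments. Unset Strict Implicit. Unset Printing Implicit Defensive.

Section Comb.
Variable n : nat.
Implicit Types E F : {set {set 'I_n}}.

Definition Nb E (x : 'I_n) : {set 'I_n} := [set u | adj E x u].

Lemma adjC E x y : adj E x y = adj E y x.
Proof. by rewrite /adj eq_sym /= finset.setUC. Qed.

Lemma adj_irr E x : adj E x x = false.
Proof. by rewrite /adj eqxx. Qed.

Lemma ball1 E x : Defs.ball E 1 x = x |: Nb E x.
Proof.
apply/setP=> u; rewrite /= !inE; congr (_ || _).
apply/existsP/idP => [[w /andP[/set1P -> //]]| h].
by exists x; rewrite inE eqxx h.
Qed.

Lemma card_ball E x : #|Defs.ball E 1 x| = (#|Nb E x|).+1.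
Proof. by rewrite ball1 cardsU1 inE adj_irr. Qed.

Definition md1 E := forall x, #|Nb E x| <= 1.

Definition m E x := odflt x [pick y | adj E x y].

Lemma mP E : md1 E -> forall x y, adj E x y = (y == m E x) && (y != x).
Proof.
move=> hE x y; rewrite /m; case: pickP => [z hz | h0] /=.
  apply/idP/andP => [h | [/eqP -> _]//]; split.
    apply/eqP; move/card_le1_eqP: (hE x) => H; apply: H; by rewrite inE.
  by apply: contraTneq h => ->; rewrite adj_irr.
by rewrite h0; case: eqP => // ->; rewrite eqxx.
Qed.

Lemma m_adj E x : md1 E -> m E x != x -> adj E x (m E x).
Proof. by move=> hE h; rewrite mP // eqxx h. Qed.

Lemma mK E : md1 E -> involutive (m E).
Proof.
move=> hE x; have [hx|hx] := eqVneq (m E x) x; first by rewrite !hx.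
have := m_adj hE hx; rewrite adjC mP // => /andP[/eqP <- _] //.
Qed.

Lemma m_fix E x : md1 E -> (m E x == x) = (#|Nb E x| == 0).
Proof.
move=> hE; rewrite cards_eq0; have [hm|hm] := eqVneq (m E x) x.
  apply/esym/eqP/setP => y; rewrite inE finset.in_set0 mP // hm; by case: eqP => // ->; rewrite eqxx.
apply/esym/negbTE/set0Pn; exists (m E x); by rewrite inE m_adj.
Qed.

Lemma bijset (A B : {set 'I_n}) : #|A| <= #|B| ->
  exists f : 'I_n -> 'I_n, {in A &, injective f} /\ {in A, forall x, f x \in B}.
Proof.
move=> hAB; exists (fun x => nth x (enum B) (index x (enum A))); split.
  move=> x y xA yA /= e.
  have ix : index x (enum A) < size (enum B).
    by rewrite -cardE (leq_trans _ hAB) // cardE index_mem mem_enum.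
  have iy : index y (enum A) < size (enum B).
    by rewrite -cardE (leq_trans _ hAB) // cardE index_mem mem_enum.
  have e' : nth x (enum B) (index x (enum A)) = nth x (enum B) (index y (enum A)).
    by rewrite e (set_nth_default x).
  move/eqP: e'; rewrite nth_uniq ?enum_uniq // => /eqP e''.
  have hx : x \in enum A by rewrite mem_enum.
  have hy : y \in enum A by rewrite mem_enum.
  by rewrite -(nth_index x hx) e'' nth_index.
move=> x xA; rewrite -mem_enum mem_nth // -cardE (leq_trans _ hAB) //.
by rewrite cardE index_mem mem_enum.
Qed.

End Comb.
Section Inv.
Variable n : nat.
Definition lo (k : 'I_n -> 'I_n) := [set x : 'I_n | (x < k x)%N].
Definition hi (k : 'I_n -> 'I_n) := [set x : 'I_n | (k x < x)%N].
Definition fx (k : 'I_n -> 'I_n) := [set x : 'I_n | k x == x].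

Lemma card_lohi k : involutive k -> (#|lo k|).*2 + #|fx k| = n.
Proof.
move=> kK.
have hh : hi k = k @: lo k.
  apply/setP => x; rewrite inE; apply/idP/imsetP => [h|[y]].
    by exists (k x) => //; rewrite inE kK.
  by rewrite inE => hy ->; rewrite kK.
have hd : lo k :&: hi k = finset.set0.
  apply/setP => x; rewrite !inE; apply/negbTE/negP => /andP[a b].
  by have := ltn_trans a b; rewrite ltnn.
have hc : ~: fx k = lo k :|: hi k.
  apply/setP => x; rewrite !inE; case: ltngtP => [h|h|e]; rewrite -(inj_eq val_inj) /=; [by rewrite gtn_eqF|by rewrite ltn_eqF|by rewrite e eqxx].
have := cardsC (fx k); rewrite hc cardsU hd finset.cards0 subn0 hh card_imset; last exact: inv_inj.
rewrite card_ord => e; by rewrite -addnn addnC.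
Qed.

Lemma inv_conj (i j : 'I_n -> 'I_n) : involutive i -> involutive j ->
  #|fx i| = #|fx j| ->
  exists s : {perm 'I_n}, forall x, s (i x) = j (s x).
Proof.
move=> iK jK hf.
have hl : #|lo i| = #|lo j|.
  have a := card_lohi iK; have b := card_lohi jK; rewrite hf in a.
  move: (etrans a (esym b)) => /eqP.
  by rewrite eqn_add2r -!muln2 eqn_mul2r /= => /eqP.
have [g [gi gl]] := bijset (eq_leq hl).
have [h [hi' hx]] := bijset (eq_leq hf).
pose s0 x := if x \in lo i then g x else if x \in hi i then j (g (i x)) else h x.
have loP k x : (x \in lo k) = (x < k x)%N by rewrite inE.
have hiP k x : (x \in hi k) = (k x < x)%N by rewrite inE.
have fxP k x : (x \in fx k) = (k x == x) by rewrite inE.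
have hi_lo x : x \in hi i -> i x \in lo i by rewrite hiP loP iK.
have lo_hi x : x \in lo j -> j x \in hi j by rewrite hiP loP jK.
have cls x : [/\ x \in lo i -> s0 x \in lo j, x \in hi i -> s0 x \in hi j
   & x \in fx i -> s0 x \in fx j].
  rewrite /s0; split => hx0.
  - by rewrite hx0 gl.
  - have : x \notin lo i by move: hx0; rewrite loP hiP => /ltnW; rewrite leqNgt.
    by move/negbTE => ->; rewrite hx0 lo_hi // gl // hi_lo.
  - have : x \notin lo i by move: hx0; rewrite loP fxP => /eqP ->; rewrite ltnn.
    have : x \notin hi i by move: hx0; rewrite hiP fxP => /eqP ->; rewrite ltnn.
    by move=> /negbTE -> /negbTE ->; rewrite hx.
have tri k x : [|| x \in lo k, x \in hi k | x \in fx k].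
  by rewrite loP hiP fxP -(inj_eq val_inj) /=; case: ltngtP => // e; rewrite -e eqxx.
have dlh k x : x \in lo k -> x \in hi k = false.
  by rewrite loP hiP => a; apply/negbTE; rewrite -leqNgt ltnW.
have dlf k x : x \in lo k -> x \in fx k = false.
  by rewrite loP fxP => a; apply/negbTE; apply: contraTneq a => ->; rewrite ltnn.
have dhf k x : x \in hi k -> x \in fx k = false.
  by rewrite hiP fxP => a; apply/negbTE; apply: contraTneq a => ->; rewrite ltnn.
have dhl k x : x \in hi k -> x \in lo k = false.
  by rewrite loP hiP => a; apply/negbTE; rewrite -leqNgt ltnW.
have dfl k x : x \in fx k -> x \in lo k = false.
  by rewrite loP fxP => /eqP ->; rewrite ltnn.
have dfh k x : x \in fx k -> x \in hi k = false.
  by rewrite hiP fxP => /eqP ->; rewrite ltnn.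
pose c k x := if x \in lo k then 0 else if x \in hi k then 1 else 2.
have cE x : c j (s0 x) = c i x.
  have [a1 a2 a3] := cls x; rewrite /c.
  case/or3P: (tri i x) => hx0.
  - by rewrite hx0 a1.
  - by rewrite (dhl _ _ hx0) hx0 (dhl _ _ (a2 hx0)) (a2 hx0).
  - by rewrite (dfl _ _ hx0) (dfh _ _ hx0) (dfl _ _ (a3 hx0)) (dfh _ _ (a3 hx0)).
have s0inj : injective s0.
  move=> x y e.
  have ec : c i x = c i y by rewrite -cE e cE.
  move: ec e; rewrite /c /s0.
  case/or3P: (tri i x) => hx0; case/or3P: (tri i y) => hy;
    rewrite ?hx0 ?hy ?(dhl _ _ hx0) ?(dhl _ _ hy) ?(dfl _ _ hx0) ?(dfl _ _ hy)
      ?(dfh _ _ hx0) ?(dfh _ _ hy) //= => _.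
  - exact: gi.
  - by move/(inv_inj jK)/gi => /(_ (hi_lo _ hx0) (hi_lo _ hy))/(inv_inj iK).
  - exact: hi'.
exists (perm s0inj) => x; rewrite !permE /s0.
case/or3P: (tri i x) => hx0.
- have hix : i x \in hi i by rewrite hiP iK -loP.
  by rewrite (dhl _ _ hix) hix hx0 iK.
- by rewrite hx0 (dhl _ _ hx0) hi_lo // jK.
- have e : i x = x by apply/eqP; rewrite -fxP.
  rewrite e (dfl _ _ hx0) (dfh _ _ hx0); apply/esym/eqP; rewrite -fxP; exact: hx.
Qed.
End Inv.

Lemma recon n (E : {set {set 'I_n}}) : md1 E -> reconstructible E 1.
Proof.
move=> hE F [phi hphi].
have hdeg v : #|Nb F (phi v)| = #|Nb E v|.
  have [f [_ fb _]] := hphi v.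
  have := card_imset (Defs.ball E 1 v) (@perm_inj _ f).
  by rewrite fb !card_ball => -[->].
have hF : md1 F by move=> w; rewrite -(permKV phi w) hdeg; exact: hE.
have hfx : #|fx (m E)| = #|fx (m F)|.
  have -> : fx (m E) = phi @^-1: fx (m F).
    by apply/setP => v; rewrite !inE m_fix // m_fix // hdeg.
  rewrite card_preimset //; exact: perm_inj.
have [s hs] := inv_conj (mK hE) (mK hF) hfx.
exists s => x y.
by rewrite !mP // -hs (inj_eq perm_inj) (inj_eq perm_inj).
Qed.
Section Prob.
Variable R : realType.
Local Open Scope ring_scope.

Lemma Ldist (T : finType) (S : {set T}) (a b : T -> R) :
  \sum_(J in powerset S) \prod_(i in S) (if i \in J then a i else b i)
  = \prod_(i in S) (a i + b i).
Proof.
pose F i := if i \in S then a i else 0.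
pose G i := if i \in S then b i else 1.
have h1 : \prod_(i in S) (a i + b i) = \prod_i (F i + G i).
  rewrite big_mkcond /=; apply: eq_bigr => i _; rewrite /F /G.
  by case: ifP => //; rewrite add0r.
rewrite h1 (@bigA_distr R 0 1 *%R +%R T F G).
rewrite big_mkcond /=; apply: eq_bigr => J _; rewrite powersetE.
case: ifP => hJ.
  rewrite big_mkcond /=; apply: eq_bigr => i _; rewrite /F /G.
  case: ifP => iS //.
  have : i \notin J by apply: contraFN iS; apply: (fintype.subsetP hJ).
  by move/negbTE => ->.
have /subsetPn [i iJ iS] := negbT hJ.
by rewrite (bigD1 i) //= iJ /F (negbTE iS) mul0r.
Qed.


Definition w n (p : R) (E : {set {set 'I_n}}) :=
  \prod_(e in pairs n) (if e \in E then p else 1 - p).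
Arguments w : clear implicits.

Lemma w_ge0 n p E : 0 <= p <= 1 -> 0 <= w n p E.
Proof.
move=> /andP[p0 p1]; apply: prodr_ge0 => e _; case: ifP => // _.
by rewrite subr_ge0.
Qed.

Lemma total n p : \sum_(E in powerset (pairs n)) w n p E = 1.
Proof.
rewrite /w Ldist; apply: big1 => e _; by rewrite addrC subrK.
Qed.

Lemma marg n p (T : {set {set 'I_n}}) : T \subset pairs n ->
  \sum_(E in powerset (pairs n) | T \subset E) w n p E = p ^+ #|T|.
Proof.
move=> hTS; rewrite big_mkcondr /=.
transitivity (\sum_(E in powerset (pairs n)) \prod_(e in pairs n)
   (if e \in E then p else (if e \in T then 0 else 1 - p))).
  apply: eq_bigr => E; rewrite powersetE => hE.
  case: ifP => hT.
    apply: eq_bigr => e eS; case: ifP => // eE.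
    have : e \notin T by apply: contraFN eE; apply: (fintype.subsetP hT).
    by move/negbTE => ->.
  have /subsetPn [e eT eE] := negbT hT.
  rewrite (bigD1 e) /=; last exact: (fintype.subsetP hTS e eT).
  by rewrite (negbTE eE) eT mul0r.
rewrite Ldist -prodr_const (bigID (fun e => e \in T)) /=.
rewrite [X in _ * X]big1 ?mulr1; last first.
  by move=> e /andP[_ /negbTE ->]; rewrite addrC subrK.
apply: eq_big => [e|e /andP[_ ->]]; last by rewrite addr0.
by apply/andP/idP => [[]//|eT]; split => //; apply: (fintype.subsetP hTS).
Qed.

Lemma le_single (I : finType) (F : I -> R) i0 :
  (forall i, 0 <= F i) -> F i0 <= \sum_i F i.
Proof.
by move=> h; rewrite (bigD1 i0) //= lerDl; apply: sumr_ge0 => i _.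
Qed.


Definition md1b n (E : {set {set 'I_n}}) := [forall x, #|Nb E x| <= 1]%N.

Lemma bad_bound n p : 0 <= p <= 1 ->
  \sum_(E in powerset (pairs n) | ~~ md1b E) w n p E <= n%:R ^+ 3 * p ^+ 2.
Proof.
move=> hp.
pose T (v a b : 'I_n) : {set {set 'I_n}} := [set [set v; a]; [set v; b]].
pose cnd (v a b : 'I_n) := [&& v != a, v != b & a != b].
pose t (E : {set {set 'I_n}}) (v a b : 'I_n) := if cnd v a b && (T v a b \subset E) then w n p E else 0.
have t0 E v a b : 0 <= t E v a b by rewrite /t; case: ifP => // _; exact: w_ge0.
apply: (@le_trans _ _ (\sum_(E in powerset (pairs n)) \sum_v \sum_a \sum_b t E v a b)).
  rewrite big_mkcondr /=; apply: ler_sum => E _.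
  case: ifP => hb; last first.
    by apply: sumr_ge0 => v _; apply: sumr_ge0 => a _; apply: sumr_ge0.
  move/forallPn: hb => [v]; rewrite -ltnNge => /card_gt1P [a [b [ha hb hab]]].
  move: ha hb; rewrite !inE /adj => /andP[va vaE] /andP[vb vbE].
  have -> : w n p E = t E v a b.
    by rewrite /t /cnd va vb hab /T finset.subUset !finset.sub1set vaE vbE.
  apply: (@le_trans _ _ (\sum_b0 t E v a b0)).
    exact: (@le_single _ (fun b => t E v a b) b (t0 E v a)).
  apply: (@le_trans _ _ (\sum_a0 \sum_b0 t E v a0 b0)).
    apply: (@le_single _ (fun a => \sum_b t E v a b) a).
    by move=> a'; apply: sumr_ge0.
  apply: (@le_single _ (fun v => \sum_a \sum_b t E v a b) v).
  by move=> v'; apply: sumr_ge0 => a' _; apply: sumr_ge0.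
rewrite exchange_big /=.
have hvab v a b : \sum_(E in powerset (pairs n)) t E v a b <= p ^+ 2.
  rewrite /t; case hc: (cnd v a b) => /=; last first.
    by rewrite big1 // exprn_ge0 //; case/andP: hp.
  move: hc; rewrite /cnd => /and3P [va vb ab].
  have hc2 : #|T v a b| = 2%N.
    rewrite /T cards2; case: eqP => // e.
    have : a \in [set v; b] by rewrite -e !inE eqxx orbT.
    by rewrite !inE (negbTE ab) eq_sym (negbTE va).
  have hs : T v a b \subset pairs n.
    by rewrite /T finset.subUset !finset.sub1set !inE !cards2 va vb.
  by rewrite -big_mkcondr /= marg // hc2.
apply: (@le_trans _ _ (\sum_(v : 'I_n) \sum_(a : 'I_n) \sum_(b : 'I_n) p ^+ 2)).
  apply: ler_sum => v _; rewrite exchange_big; apply: ler_sum => a _.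
  rewrite exchange_big; apply: ler_sum => b _; exact: hvab.
rewrite !sumr_const !card_ord.
rewrite le_eqVlt; apply/orP; left; apply/eqP.
ring.
Qed.
End Prob.
Arguments w {R} n p E.

Local Open Scope ring_scope.
Local Open Scope classical_set_scope.

Theorem theorem1p7 (R : realType) (p : nat -> R) :
  (forall n : nat, 0 <= p n <= 1) ->
  (fun n : nat => p n * n%:R `^ (3 / 2)) @ \oo --> (0 : R) ->
  (fun n : nat => gnp_prob n (p n) (fun E => `[< reconstructible E 1 >])) @ \oo --> (1 : R).
Proof.
move=> hp hcvg.
set h := fun n : nat => p n * n%:R `^ (3 / 2).
have gE k Q : gnp_prob k (p k) Q = \sum_(E in powerset (pairs k) | Q E) w k (p k) E by [].
have hsq k : (k%:R ^+ 3 * p k ^+ 2) = h k * h k.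
  have hx : k%:R `^ (3/2) * k%:R `^ (3/2) = k%:R ^+ 3 :> R.
    rewrite -expr2 -powR_mulrn ?powR_ge0 // -powRrM.
    have -> : (3 / 2 * 2%:R : R) = 3%:R by rewrite -mulrA mulVf ?mulr1 // pnatr_eq0.
    by rewrite powR_mulrn // ler0n.
  by rewrite /h -hx mulrACA (mulrC (k%:R `^ _) (p k)).
have hup k : gnp_prob k (p k) (fun E : {set {set 'I_k}} => `[< reconstructible E 1 >]) <= 1.
  rewrite gE -(total k (p k)) big_mkcondr /=; apply: ler_sum => E _.
  by case: ifP => _ //; exact: w_ge0.
have hlow k : 1 - h k * h k <= gnp_prob k (p k) (fun E : {set {set 'I_k}} => `[< reconstructible E 1 >]).
  have ht := total k (p k); rewrite (bigID (@md1b k)) /= in ht.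
  have hb := bad_bound k (hp k).
  have hg : \sum_(E in powerset (pairs k) | md1b E) w k (p k) E <= gnp_prob k (p k) (fun E : {set {set 'I_k}} => `[< reconstructible E 1 >]).
    rewrite gE big_mkcondr [X in _ <= X]big_mkcondr /=; apply: ler_sum => E _.
    case hm: (md1b E); last by case: ifP => _ //; exact: w_ge0.
    rewrite asboolT //; apply: recon => x; exact: (forallP hm x).
  by rewrite -hsq lerBlDr -{1}ht (lerD hg hb).

apply: (squeeze_cvgr (f := fun k => 1 - h k * h k) (h := fun _ : nat => (1 : R))).
-
  apply: nearW => k; by rewrite (hlow k) (hup k).
- have H : (fun k => 1 - h k * h k) @ \oo --> (1 - 0 * 0 : R).
    apply: cvgB; [exact: cvg_cst | exact: cvgM].
  by rewrite mul0r subr0 in H.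
- exact: cvg_cst.

Qed.
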